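(* Let $p\ge 3$ be an integer and let $n\ge p+2$ be an integer. Then $\mathrm{conv}^{\leq p}(DW_n)\ge \frac{p-1}{(p-2)^2+1}\cdot(n-2)$.
   Context: For $n\ge 5$, the double wheel $DW_n$ is the graph obtained from a cycle on $n-2$ vertices by adding two new vertices, each adjacent to all vertices of the cycle (the two new vertices are not adjacent to each other). For an oriented graph $D$ and $X\subseteq V(D)$, the inversion of $X$ reverses every arc with both endvertices in $X$; a $(\leq p)$-inversion is the inversion of a set of at most $p$ vertices. $\mathrm{conv}^{\leq p}(G)$ is the minimum number of $(\leq p)$-inversions transforming an orientation of $G$ into its converse (all arcs reversed); it does not depend on the orientation. *)

(* Defs.v *)
From mathcomp Require Import all_boot all_order all_algebra.
Set Implicit Arguments. Unset Strict Implicit. Unset Printing Implicit Defensive.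

(* Double wheel DW_n on vertex set 'I_n: vertices 0..n-3 form the cycle
   C_{n-2} (i ~ i+1 mod n-2), vertices n-2 and n-1 are the two hubs,
   adjacent to every cycle vertex and not to each other. *)
Definition dw_edge (n : nat) : rel 'I_n := fun x y =>
  let m := (n - 2)%N in
  [|| [&& (x < m)%N, (y < m)%N &
         (y == (x.+1 %% m)%N :> nat) || (x == (y.+1 %% m)%N :> nat)],
      ((x < m)%N && (m <= y)%N) | ((y < m)%N && (m <= x)%N)].

Definition is_orientation (T : finType) (E : rel T) (D : rel T) : Prop :=
  forall x y, E x y = (D x y || D y x) /\ ~~ (D x y && D y x).

Definition invert (T : finType) (X : {set T}) (D : rel T) : rel T :=
  fun x y => if (x \in X) && (y \in X) then D y x else D x y.

Definition invert_seq (T : finType) (s : seq {set T}) (D : rel T) : rel T :=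
  foldl (fun D' X => invert X D') D s.

Definition converse_seq (T : finType) (p : nat) (D : rel T) (s : seq {set T}) : Prop :=
  all (fun X : {set T} => #|X| <= p)%N s /\
  forall x y, invert_seq s D x y = D y x.

(* Main.v *)
Require Import Defs.
From mathcomp Require Import all_boot all_order all_algebra zify.
Import GRing.Theory Num.Theory.
Set Implicit Arguments. Unset Strict Implicit. Unset Printing Implicit Defensive.

Lemma invert_seq_notin (n : nat) (s : seq {set 'I_n}) (D : rel 'I_n) x y :
  (forall X, X \in s -> ~~ ((x \in X) && (y \in X))) ->
  invert_seq s D x y = D x y.
Proof.
elim: s D => [|X s IH] D H //=.
rewrite /invert_seq /= -/(invert_seq s (invert X D)) IH.
  by rewrite /invert (negbTE (H X (mem_head _ _))).
by move=> Y hY; apply: H; rewrite in_cons hY orbT.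
Qed.

Lemma dw_cover (p n : nat) (D : rel 'I_n) (hD : is_orientation (@dw_edge n) D)
  (s : seq {set 'I_n}) (hs : converse_seq p D s) x y :
  dw_edge x y -> exists2 X, X \in s & (x \in X) && (y \in X).
Proof.
move=> E.
case: (boolP (has (fun X : {set 'I_n} => (x \in X) && (y \in X)) s)) => [/hasP//|/hasPn H].
have := hs.2 x y; rewrite invert_seq_notin // => Hxy.
have [h1 h2] := hD x y; move: E h2; rewrite h1 Hxy; by case: (D y x).
Qed.

Lemma has_sum (T : eqType) (s : seq T) (f : T -> nat) X :
  X \in s -> 0 < f X -> 0 < \sum_(Y <- s) f Y.
Proof.
move=> hX hf; rewrite (big_rem X hX) /=; exact: leq_trans hf (leq_addr _ _).
Qed.

Lemma sum_lt (m n : nat) : m <= n -> \sum_(v : 'I_n) (v < m : nat) = m.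
Proof.
move=> hm.
transitivity (\sum_(v < n | v < m) 1).
  rewrite [RHS]big_mkcond; apply: eq_bigr => v _; by case: (v < m).
by rewrite -(big_ord_widen _ (fun _ => 1) hm) sum1_card card_ord.
Qed.
Definition inX n (X : {set 'I_n}) (k : nat) : bool := [exists y in X, val y == k].
Definition tX n (X : {set 'I_n}) : nat := \sum_(v : 'I_n) ((v < n - 2) && (v \in X)).
Definition cX n (X : {set 'I_n}) : nat :=
  \sum_(v : 'I_n) ((v < n - 2) && (v \in X) && inX X (v.+1 %% (n - 2))).

Lemma c_le_t n (X : {set 'I_n}) : cX X <= tX X.
Proof. apply: leq_sum => v _; by case: (v < n - 2); case: (v \in X); case: (inX _ _). Qed.

Lemma t_le_m n (X : {set 'I_n}) : tX X <= n - 2.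
Proof.
rewrite -{1}(sum_lt (leq_subr 2 n)); apply: leq_sum => v _; case: (v < n - 2); by rewrite ?leq_b1.
Qed.

Lemma strict n (X : {set 'I_n}) : 0 < tX X -> tX X < n - 2 -> cX X < tX X.
Proof.
set m := n - 2 => ht htm.
have m0 : 0 < m by apply: leq_ltn_trans htm.
have Sm : \sum_(v : 'I_n) (v < m : nat) = m := sum_lt (leq_subr 2 n).
have [u /andP[um uX]] : exists u : 'I_n, (u < m) && (u \notin X).
  apply/existsP; apply: contraT => /existsPn H; move: htm; rewrite /tX -/m.
  rewrite -{2}Sm (eq_bigr (fun v : 'I_n => (v < m : nat))).
    by rewrite ltnn.
  move=> v _; have := H v; by case: (v < m); case: (v \in X).
have [j /andP[jm jX]] : exists j : 'I_n, (j < m) && (j \in X).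
  apply/existsP; apply: contraT => /existsPn H; move: ht; rewrite /tX -/m big1 //.
  move=> v _; by rewrite (negbTE (H v)).
have [w /and3P[wm wX wn]] : exists w : 'I_n, [&& w < m, w \in X & ~~ inX X (w.+1 %% m)].
  apply/existsP; apply: contraT => /existsPn H.
  have H' : forall w : 'I_n, w < m -> w \in X -> inX X (w.+1 %% m).
    move=> v vm vX; have := H v; rewrite vm vX /=; by case: (inX _ _).
  have Hk : forall k, inX X ((j + k) %% m).
    elim=> [|k IH]; first by rewrite addn0 modn_small //; apply/existsP; exists j; rewrite jX eqxx.
    case/existsP: IH => y /andP[yX /eqP yv].
    have := H' y; rewrite yv ltn_pmod // => /(_ isT); rewrite -yv => /(_ yX).
    by rewrite yv -addn1 modnDml addn1 addnS.
  have := Hk (u + m - j); rewrite addnBA; last by apply: leq_trans (ltnW jm) (leq_addl _ _).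
  rewrite addnC addnK modnDr modn_small // => /existsP[y /andP[yX /eqP yu]].
  have : y = u by apply: val_inj.
  by move=> yeq; move: uX; rewrite -yeq yX.
rewrite /cX /tX -/m (bigD1 w) //= [X in _ < X](bigD1 w) //= wm wX (negbTE wn) /=.
rewrite add0n add1n ltnS; apply: leq_sum => v _; by case: (v < m); case: (v \in X); case: (inX _ _).
Qed.

Lemma full n (X : {set 'I_n}) : (forall v : 'I_n, v < n - 2 -> v \in X) -> tX X = n - 2.
Proof.
move=> H; rewrite /tX -{2}(sum_lt (leq_subr 2 n)); apply: eq_bigr => v _.
by case vm: (v < n - 2) => //=; rewrite H.
Qed.

Lemma card_bound n (X : {set 'I_n}) (a b : 'I_n) :
  val a = n - 2 -> val b = (n - 2).+1 -> tX X + (a \in X) + (b \in X) <= #|X|.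
Proof.
move=> va vb.
have E : forall c : 'I_n, \sum_(v : 'I_n) ((v == c) && (v \in X)) = (c \in X).
  move=> c; rewrite (bigD1 c) //= eqxx big1 ?addn0 //.
  by move=> v /negbTE ->.
rewrite -E -E /tX -!big_split /= -sum1_card [X in _ <= X]big_mkcond /=.
apply: leq_sum => v _.
case vX: (v \in X); rewrite ?andbF //= !andbT.
case: (eqVneq v a) => [->|va'].
  rewrite va ltnn /=; case: eqP => // /(congr1 val); rewrite va vb; lia.
case: (eqVneq v b) => [->|vb'] /=.
  by rewrite vb ltnNge leqnSn.
by case: (_ < _).
Qed.
Lemma arith (p m t c : nat) (ea eb : bool) : 3 <= p -> t + ea + eb <= p -> c <= t ->
  (0 < t -> t < m -> c < t) -> t <= m -> (p < m \/ p <= 5) -> p <= m ->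
  ea * t + eb * t + (p - 3) * c <= (p - 2) ^ 2 + 1.
Proof.
move=> hp h1 h2 h3 h4 h5 h6.
have [q hq] : exists q, p = q + 3 by exists (p - 3); lia.
subst p.
have -> : q + 3 - 2 = q.+1 by lia.
have -> : q + 3 - 3 = q by lia.
case: (posnP t) => [t0|tp].
  move: h2; rewrite t0 leqn0 => /eqP ->; rewrite !muln0; lia.
case: (ltnP t m) => [tm|tm].
  have := h3 tp tm => ct.
  case: ea h1; case: eb => /= h1.
  - have hq : q * c <= q * q by apply: leq_mul => //; lia.
    nia.
  - have hq : q * c <= q * q.+1 by apply: leq_mul => //; lia.
    nia.
  - have hq : q * c <= q * q.+1 by apply: leq_mul => //; lia.
    nia.
  - have hq : q * c <= q * q.+2 by apply: leq_mul => //; lia.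
    nia.
have tme : t = m by lia.
case: h5 => h5; first lia.
case: ea h1; case: eb => /= h1; try lia.
have hq : q * c <= q * (q + 3) by apply: leq_mul => //; lia.
nia.
Qed.

Lemma sum_cover n (s : seq {set 'I_n}) (F : {set 'I_n} -> 'I_n -> bool) :
  (forall v : 'I_n, v < n - 2 -> exists2 X, X \in s & F X v) ->
  n - 2 <= \sum_(X <- s) \sum_(v : 'I_n) (F X v : nat).
Proof.
move=> H; rewrite exchange_big /= -{1}(sum_lt (leq_subr 2 n)).
apply: leq_sum => v _; case vm: (v < n - 2) => //=.
have [X hX hF] := H v vm; apply: (has_sum hX); by rewrite hF.
Qed.

Lemma sum_const_le (T : eqType) (s : seq T) (f : T -> nat) d :
  (forall X, X \in s -> f X <= d) -> \sum_(X <- s) f X <= d * size s.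
Proof.
move=> H; rewrite big_seq; apply: (leq_trans (@leq_sum _ _ _ _ (fun _ => d) H)).
by rewrite -big_seq big_const_seq count_predT iter_addn_0.
Qed.
Lemma main_nat (p n : nat) (hp : (3 <= p)%N) (hn : (p + 2 <= n)%N)
  (D : rel 'I_n) (hD : is_orientation (@dw_edge n) D)
  (s : seq {set 'I_n}) (hs : converse_seq p D s) :
  (p - 1) * (n - 2) <= ((p - 2) ^ 2 + 1) * size s.
Proof.
set m := n - 2.
have hpm : p <= m by rewrite /m; lia.
have am : m < n by rewrite /m; lia.
have bm : m.+1 < n by rewrite /m; lia.
set a : 'I_n := Ordinal am.
set b : 'I_n := Ordinal bm.
have cov := dw_cover hD hs.
have hX : forall X, X \in s -> #|X| <= p.
  by move=> X; apply: (allP hs.1).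
have SA : m <= \sum_(X <- s) (a \in X) * tX X.
  have -> : \sum_(X <- s) (a \in X) * tX X =
            \sum_(X <- s) \sum_(v : 'I_n) (((v < n - 2) && (v \in X) && (a \in X)) : nat).
    apply: eq_bigr => X _; rewrite /tX big_distrr /=; apply: eq_bigr => v _.
    by case: (a \in X); case: (_ && _).
  apply: sum_cover => v vm.
  have [X Xs /andP[vX aX]] : exists2 X, X \in s & (v \in X) && (a \in X).
    by apply: cov; rewrite /dw_edge -/m vm /= leqnn orbT.
  by exists X => //; rewrite vm vX aX.
have SB : m <= \sum_(X <- s) (b \in X) * tX X.
  have -> : \sum_(X <- s) (b \in X) * tX X =
            \sum_(X <- s) \sum_(v : 'I_n) (((v < n - 2) && (v \in X) && (b \in X)) : nat).
    apply: eq_bigr => X _; rewrite /tX big_distrr /=; apply: eq_bigr => v _.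
    by case: (b \in X); case: (_ && _).
  apply: sum_cover => v vm.
  have [X Xs /andP[vX bX]] : exists2 X, X \in s & (v \in X) && (b \in X).
    by apply: cov; rewrite /dw_edge -/m vm /= leqnSn orbT.
  by exists X => //; rewrite vm vX bX.
have SC : m <= \sum_(X <- s) cX X.
  apply: sum_cover => v vm.
  have m0 : 0 < m by apply: leq_ltn_trans vm.
  have wn : v.+1 %% m < n by apply: leq_trans (ltn_pmod _ m0) (ltnW am).
  set w : 'I_n := Ordinal wn.
  have [X Xs /andP[vX wX]] : exists2 X, X \in s & (v \in X) && (w \in X).
    by apply: cov; rewrite /dw_edge -/m vm /= ltn_pmod // eqxx.
  exists X => //; rewrite vm vX /=; apply/existsP; exists w; by rewrite wX eqxx.
have ta : forall X, X \in s -> tX X + (a \in X) + (b \in X) <= p.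
  move=> X Xs; apply: leq_trans (hX X Xs); exact: card_bound.
case: (boolP ((p < m) || (p <= 5))) => hcase.
  have per : forall X, X \in s ->
      (a \in X) * tX X + (b \in X) * tX X + (p - 3) * cX X <= (p - 2) ^ 2 + 1.
    move=> X Xs; apply: (arith (m := m)) => //.
    - exact: ta.
    - exact: c_le_t.
    - exact: strict.
    - exact: t_le_m.
    - by case/orP: hcase; [left|right].
  have := sum_const_le per; rewrite !big_split /= -big_distrr /=.
  move: SA SB SC; set A := \sum_(X <- s) _; set B := \sum_(X <- s) _; set C := \sum_(X <- s) _.
  move=> SA SB SC hh; apply: leq_trans hh.
  have : (p - 3) * m <= (p - 3) * C by apply: leq_mul.
  have -> : p - 1 = (p - 3) + 2 by lia.
  rewrite mulnDl; lia.
have pm : p = m by move: hcase; rewrite negb_or; lia.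
have per : forall X, X \in s -> (a \in X) * tX X <= p - 1.
  move=> X Xs; have := ta X Xs; case: (a \in X) => /=; lia.
have := sum_const_le per => h2.
have h3 : p <= (p - 1) * size s by rewrite {1}pm; exact: leq_trans SA h2.
have s2 : 2 <= size s.
  move: h3; case: (size s) => [|[|k]] //; lia.
have hc : p <= 5 = false by apply/negP => h; move: hcase; rewrite h orbT.
rewrite -pm.
have h4 : (p - 1) * p <= ((p - 2) ^ 2 + 1) * 2.
  have [q hq] : exists q, p = q + 6 by exists (p - 6); lia.
  subst p; rewrite !subnS !subn0 /= !addnS !addn0 /=.
  nia.
apply: leq_trans h4 _; exact: leq_mul.
Qed.

Unset Implicit Arguments.
Local Open Scope ring_scope.

Theorem mainTheorem19 (p n : nat) (hp : (3 <= p)%N) (hn : (p + 2 <= n)%N)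
  (D : rel 'I_n) (hD : is_orientation (@dw_edge n) D)
  (s : seq {set 'I_n}) (hs : converse_seq p D s) :
  ((p - 1)%:R / (((p - 2) ^ 2 + 1)%N)%:R) * (n - 2)%:R <= (size s)%:R :> rat.
Proof.
rewrite mulrAC ler_pdivrMr ?ltr0n ?addn1 // -!natrM ler_nat.
apply: leq_trans (main_nat hp hn hD hs) _; by rewrite mulnC addn1.
Qed.
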